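(* Let $s:N_S\to\ell_2$ be any bijection with $s(n)=ne_1$ for all $n\in\mathbf{N}$, and let $x\oplus_s y=s^{-1}(s(x)+s(y))$. Then it is not the case that $\underbrace{m\oplus_s\cdots\oplus_s m}_{n}=nm$ for all $n\in\mathbf{N}$ and all $m\in N_S$.
   Context: $\mathbf{N}=\{1,2,3,\dots\}$. $\ell_2$ is the Hilbert space of square-summable real sequences and $e_1=(1,0,0,\dots)$. The set $N_S$ of supernatural (Steinitz) numbers consists of formal products $n=\prod_{p} p^{e_p(n)}$ over all primes $p$, with exponents $e_p(n)\in\{0,1,2,\dots\}\cup\{\infty\}$ (possibly infinitely many nonzero); $\mathbf{N}$ is identified with the elements having all exponents finite and only finitely many nonzero. Multiplication is defined by adding exponents, with $\infty+e=\infty$ (so e.g. $2\cdot 2^\infty=2^\infty$ and $3\cdot 2^\infty\ne 2^\infty$). *)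

(* Defs.v *)
From mathcomp Require Import all_boot.
From Stdlib Require Import Reals.

Set Implicit Arguments.
Unset Strict Implicit.

(* Extended exponents {0,1,2,...} U {oo}: [Some k] = k, [None] = oo. *)
Definition ext_add (a b : option nat) : option nat :=
  match a, b with
  | Some x, Some y => Some (x + y)%N
  | _, _ => None
  end.

(* Supernatural (Steinitz) numbers: exponent e_p for every prime p;
   non-prime indices are normalised to exponent 0. *)
Definition NS : Type :=
  {e : nat -> option nat | forall p, ~~ prime p -> e p = Some 0%N}.

Definition NS_exp (x : NS) (p : nat) : option nat := proj1_sig x p.

Lemma NS_mul_proof (x y : NS) :
  forall p, ~~ prime p -> ext_add (NS_exp x p) (NS_exp y p) = Some 0%N.
Proof.
move=> p np; rewrite /NS_exp (proj2_sig x p np) (proj2_sig y p np) //.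
Qed.

Definition NS_mul (x y : NS) : NS :=
  exist _ (fun p => ext_add (NS_exp x p) (NS_exp y p)) (NS_mul_proof x y).

Lemma NS_of_nat_proof (n : nat) :
  forall p, ~~ prime p -> (if prime p then Some (logn p n) else Some 0%N) = Some 0%N.
Proof. by move=> p /negbTE ->. Qed.

(* Embedding of N = {1,2,...} into N_S: e_p(n) = p-adic valuation of n.
   (Only used for n >= 1.) *)
Definition NS_of_nat (n : nat) : NS :=
  exist _ (fun p => if prime p then Some (logn p n) else Some 0%N)
        (NS_of_nat_proof n).

Definition l2 (f : nat -> R) : Prop :=
  exists l : R, infinite_sum (fun i => (f i * f i)%R) l.

Definition e1 : nat -> R := fun i => if (i == 0)%N then 1%R else 0%R.

Definition seq_add (f g : nat -> R) : nat -> R := fun i => (f i + g i)%R.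
Definition seq_scale (c : R) (f : nat -> R) : nat -> R := fun i => (c * f i)%R.

(* x (+)_s y = s^{-1}(s x + s y), where sinv is the inverse of s on l_2. *)
Definition oplus_s (s : NS -> nat -> R) (sinv : (nat -> R) -> NS) (x y : NS) : NS :=
  sinv (seq_add (s x) (s y)).

(* iter_oplus s sinv k m = m (+)_s m (+)_s ... (+)_s m with k+1 copies of m. *)
Fixpoint iter_oplus (s : NS -> nat -> R) (sinv : (nat -> R) -> NS) (k : nat) (m : NS) : NS :=
  match k with
  | 0 => m
  | k'.+1 => oplus_s s sinv (iter_oplus s sinv k' m) m
  end.

Definition nfold_oplus s sinv (n : nat) (m : NS) : NS := iter_oplus s sinv n.-1 m.

(* Main.v *)
Require Import Defs.
From mathcomp Require Import all_boot.
From Stdlib Require Import Reals Lra ProofIrrelevance FunctionalExtensionality.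

Lemma l2_double (f : nat -> R) : l2 f -> l2 (seq_add f f).
Proof.
move=> [l Hl]; exists (4 * l)%R.
have H : Un_cv (fun n => sum_f_R0 (fun i => (f i * f i)%R) n) l by exact: Hl.
have H4 : Un_cv (fun _ : nat => 4%R) 4%R.
  move=> eps He; exists 0%N => n _; rewrite /Rdist Rminus_diag Rabs_R0; lra.
have := CV_mult _ _ _ _ H4 H.
apply: Un_cv_ext => n; rewrite scal_sum; apply: sum_eq => i _.
rewrite /seq_add; ring.
Qed.

Definition ea (p : nat) : option nat :=
  if prime p then (if p == 2 then None else Some 0) else Some 0.
Definition eb (p : nat) : option nat :=
  if prime p then (if p == 2 then None else if p == 3 then Some 1 else Some 0)
  else Some 0.
Lemma ea_proof : forall p, ~~ prime p -> ea p = Some 0.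
Proof. by move=> p /negbTE; rewrite /ea => ->. Qed.
Lemma eb_proof : forall p, ~~ prime p -> eb p = Some 0.
Proof. by move=> p /negbTE; rewrite /eb => ->. Qed.
Definition ma : NS := exist _ ea ea_proof.
Definition mb : NS := exist _ eb eb_proof.

Lemma logn2 p : prime p -> p != 2 -> logn p 2 = 0.
Proof.
move=> pp n2; rewrite lognE pp /=.
case: ifP => // /dvdn_leq /= H.
have := prime_gt1 pp; move: (H isT) n2.
by case: p {pp H} => [|[|[|p]]].
Qed.

Lemma mul2_fix (m : NS) (e : nat -> option nat) :
  (forall p, NS_exp m p = e p) ->
  (forall p, prime p -> e p = if p == 2 then None else e p) ->
  (forall p, prime p -> p != 2 -> exists k, e p = Some k) ->
  NS_mul (NS_of_nat 2) m = m.
Proof.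
move=> Hm H2 Hk.
destruct m as [f pf]; apply: eq_sig_hprop => [x y z|]; first exact: proof_irrelevance.
rewrite /=; apply: functional_extensionality => p.
rewrite /NS_exp /= in Hm.
case pp: (prime p); last by rewrite (pf p (negbT pp)).
rewrite Hm.
case: (eqVneq p 2) => [E|n2].
  by rewrite (H2 p pp) E /=; case: (e 2).
by rewrite logn2 //; case: (Hk p pp n2) => k ->.
Qed.

Theorem mainTheorem14 (s : NS -> nat -> R) (sinv : (nat -> R) -> NS)
  (s_in_l2 : forall x, l2 (s x))
  (sinv_s : forall x, sinv (s x) = x)
  (s_sinv : forall f, l2 f -> s (sinv f) = f)
  (s_nat : forall n : nat, (1 <= n)%N -> s (NS_of_nat n) = seq_scale (INR n) e1) :
  ~ (forall (n : nat) (m : NS), (1 <= n)%N ->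
       nfold_oplus s sinv n m = NS_mul (NS_of_nat n) m).
Proof.
move=> H.
have zero : forall m, NS_mul (NS_of_nat 2) m = m -> s m = (fun _ => 0%R).
  move=> m Hm; have := H 2 m isT; rewrite Hm /nfold_oplus /= /oplus_s => E.
  have E2 := s_sinv _ ((@l2_double _ (s_in_l2 m))); rewrite E in E2.
  apply: functional_extensionality => i.
  have := f_equal (fun g => g i) E2; rewrite /seq_add /=; lra.
have Ha : s ma = (fun _ => 0%R).
  apply: zero; apply: (@mul2_fix _ ea) => // p pp.
    by rewrite /ea pp; case: eqP => // ->.
  by rewrite /ea pp => /negbTE ->; exists 0.
have Hb : s mb = (fun _ => 0%R).
  apply: zero; apply: (@mul2_fix _ eb) => // p pp.
    by rewrite /eb pp; case: eqP => // ->.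
  by rewrite /eb pp => /negbTE ->; case: ifP; [exists 1|exists 0].
have : ma = mb by rewrite -(sinv_s ma) -(sinv_s mb) Ha Hb.
by move/(f_equal (fun x => NS_exp x 3)).
Qed.
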